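(* If $X$ and $Y$ are metric spaces which are coarsely homotopy equivalent, then $\mathrm{c\text{-}cat}(X)=\mathrm{c\text{-}cat}(Y)$.
   Context: Notation: $\mathbb{R}_+=[0,\infty)$. For metric spaces $X,Y$, a (not necessarily continuous) map $f:X\to Y$ is controlled if for every $r>0$ there is $S>0$ with $d(x,x')<r\Rightarrow d(f(x),f(x'))<S$; proper if preimages of bounded sets are bounded; coarse if both. For a coarse map $q:X\to\mathbb{R}_+$, the $q$-cylinder is $I_qX=\{(x,t)\in X\times\mathbb{R}_+ : t\le q(x)\}$ with the metric restricted from the product (sup) metric, and $i_0(x)=(x,0)$, $i_1(x)=(x,q(x))$. Coarse maps $f,g:X\to Y$ are coarsely homotopic if there exist a coarse $q:X\to\mathbb{R}_+$ and a coarse $H:I_qX\to Y$ with $H\circ i_0=f$, $H\circ i_1=g$. A coarse map $f:X\to Y$ is a coarse homotopy equivalence if there is a coarse map $g:Y\to X$ with $g\circ f$ and $f\circ g$ coarsely homotopic to $1_X$ and $1_Y$; $X,Y$ are then coarsely homotopy equivalent. A subset $A\subseteq X$ is coarsely categorical if there exist coarse maps $\alpha:\mathbb{R}_+\to X$ and $j:A\to\mathbb{R}_+$ such that $\alpha\circ j$ is coarsely homotopic to the inclusion $A\hookrightarrow X$. The (reduced) coarse Lusternik–Schnirelmann category $\mathrm{c\text{-}cat}(X)$ is the least $k$ such that $X$ can be covered by $k+1$ coarsely categorical subsets (and $\infty$ if none exists). *)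

(* Defs.v *)
From Stdlib Require Import Reals ClassicalEpsilon.
Open Scope R_scope.
Set Implicit Arguments.

Record MetricSpace := {
  ms_carrier :> Type;
  ms_dist : ms_carrier -> ms_carrier -> R;
  ms_dist_ge0 : forall x y, 0 <= ms_dist x y;
  ms_dist_eq0 : forall x y, ms_dist x y = 0 <-> x = y;
  ms_dist_sym : forall x y, ms_dist x y = ms_dist y x;
  ms_dist_tri : forall x y z, ms_dist x z <= ms_dist x y + ms_dist y z
}.

Definition controlled {X Y : Type} (dX : X -> X -> R) (dY : Y -> Y -> R)
  (f : X -> Y) : Prop :=
  forall r, 0 < r -> exists S, 0 < S /\
    forall x x', dX x x' < r -> dY (f x) (f x') < S.

Definition bounded {X : Type} (dX : X -> X -> R) (B : X -> Prop) : Prop :=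
  exists r, forall x x', B x -> B x' -> dX x x' <= r.

Definition proper {X Y : Type} (dX : X -> X -> R) (dY : Y -> Y -> R)
  (f : X -> Y) : Prop :=
  forall B : Y -> Prop, bounded dY B -> bounded dX (fun x => B (f x)).

Definition coarse {X Y : Type} (dX : X -> X -> R) (dY : Y -> Y -> R)
  (f : X -> Y) : Prop := controlled dX dY f /\ proper dX dY f.

Definition Rplus := { t : R | 0 <= t }.
Definition dRplus (s t : Rplus) : R := Rabs (proj1_sig s - proj1_sig t).

Definition cyl {X : Type} (q : X -> Rplus) :=
  { p : X * R | 0 <= snd p /\ snd p <= proj1_sig (q (fst p)) }.
Definition dcyl {X : Type} (dX : X -> X -> R) (q : X -> Rplus)
  (u v : cyl q) : R :=
  Rmax (dX (fst (proj1_sig u)) (fst (proj1_sig v)))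
       (Rabs (snd (proj1_sig u) - snd (proj1_sig v))).

Lemma i0_prf {X : Type} (q : X -> Rplus) (x : X) :
  0 <= snd (x, 0) /\ snd (x, 0) <= proj1_sig (q (fst (x, 0))).
Proof. simpl; split; [apply Rle_refl | exact (proj2_sig (q x))]. Qed.
Lemma i1_prf {X : Type} (q : X -> Rplus) (x : X) :
  0 <= snd (x, proj1_sig (q x)) /\
  snd (x, proj1_sig (q x)) <= proj1_sig (q (fst (x, proj1_sig (q x)))).
Proof. simpl; split; [exact (proj2_sig (q x)) | apply Rle_refl]. Qed.

Definition i0 {X : Type} (q : X -> Rplus) (x : X) : cyl q :=
  exist _ (x, 0) (i0_prf q x).
Definition i1 {X : Type} (q : X -> Rplus) (x : X) : cyl q :=
  exist _ (x, proj1_sig (q x)) (i1_prf q x).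

Definition coarsely_homotopic {X Y : Type} (dX : X -> X -> R)
  (dY : Y -> Y -> R) (f g : X -> Y) : Prop :=
  exists q : X -> Rplus, coarse dX dRplus q /\
  exists H : @cyl X q -> Y, coarse (@dcyl X dX q) dY H /\
    (forall x, H (@i0 X q x) = f x) /\ (forall x, H (@i1 X q x) = g x).

Definition coarse_homotopy_equivalence (X Y : MetricSpace) (f : X -> Y) : Prop :=
  coarse (ms_dist X) (ms_dist Y) f /\
  exists g : Y -> X, coarse (ms_dist Y) (ms_dist X) g /\
    coarsely_homotopic (ms_dist X) (ms_dist X) (fun x => g (f x)) (fun x => x) /\
    coarsely_homotopic (ms_dist Y) (ms_dist Y) (fun y => f (g y)) (fun y => y).

Definition coarsely_homotopy_equivalent (X Y : MetricSpace) : Prop :=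
  exists f : X -> Y, coarse_homotopy_equivalence X Y f.

Definition dsub {X : MetricSpace} (A : X -> Prop) (a b : {x : X | A x}) : R :=
  ms_dist X (proj1_sig a) (proj1_sig b).

Definition coarsely_categorical (X : MetricSpace) (A : X -> Prop) : Prop :=
  exists (alpha : Rplus -> X) (j : {x : X | A x} -> Rplus),
    coarse dRplus (ms_dist X) alpha /\ coarse (dsub A) dRplus j /\
    coarsely_homotopic (dsub A) (ms_dist X)
      (fun a => alpha (j a)) (fun a => proj1_sig a).

Definition cat_cover (X : MetricSpace) (k : nat) : Prop :=
  exists A : nat -> X -> Prop,
    (forall i, (i <= k)%nat -> coarsely_categorical X (A i)) /\
    (forall x : X, exists i, (i <= k)%nat /\ A i x).

(* Reduced coarse LS category: Some k for the least such k, None for infinity. *)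
Definition ccat (X : MetricSpace) : option nat :=
  match excluded_middle_informative (exists k, cat_cover X k) with
  | left _ => Some (epsilon (inhabits 0%nat)
                      (fun k => cat_cover X k /\
                                forall j, cat_cover X j -> (k <= j)%nat))
  | right _ => None
  end.

(* Main.v *)
Require Import Defs.
From Stdlib Require Import Reals.
From Stdlib Require Import Lra ProofIrrelevance ClassicalEpsilon Classical FunctionalExtensionality PropExtensionality.
Open Scope R_scope.

Definition is_metric {X:Type} (d: X->X->R) :=
  (forall x, d x x = 0) /\ (forall x y, d x y = d y x) /\
  (forall x y z, d x z <= d x y + d y z).

Lemma cyl_eq {X} (q: X-> Defs.Rplus) (u v: cyl q) : proj1_sig u = proj1_sig v -> u = v.
Proof. destruct u, v; simpl; intros ->. f_equal; apply proof_irrelevance. Qed.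

Lemma dcyl_metric {X} (dX: X->X->R) (q: X-> Defs.Rplus): is_metric dX -> is_metric (@dcyl X dX q).
Proof.
  intros [H0 [Hs Ht]]; split; [|split]; intros; unfold dcyl.
  - rewrite H0. replace (snd (proj1_sig x) - snd (proj1_sig x)) with 0 by ring.
    rewrite Rabs_R0. unfold Rmax; destruct Rle_dec; lra.
  - rewrite Hs, Rabs_minus_sym. reflexivity.
  - destruct x as [[x1 x2] px], y as [[y1 y2] py], z as [[z1 z2] pz]; simpl.
    specialize (Ht x1 y1 z1). pose proof (Rabs_triang (x2-y2) (y2-z2)).
    replace (x2 - z2) with ((x2-y2)+(y2-z2)) by ring.
    unfold Rmax; repeat destruct Rle_dec; lra.
Qed.

Lemma dsub_metric (X: MetricSpace) (A: X -> Prop) : is_metric (dsub A).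
Proof.
  unfold dsub; split; [|split]; intros.
  - apply ms_dist_eq0; reflexivity.
  - apply ms_dist_sym.
  - apply ms_dist_tri.
Qed.

Lemma ms_metric (X: MetricSpace) : is_metric (ms_dist X).
Proof.
  split; [|split]; intros.
  - apply ms_dist_eq0; reflexivity.
  - apply ms_dist_sym.
  - apply ms_dist_tri.
Qed.

Lemma bounded_union {X} (d: X->X->R) (P1 P2 P: X->Prop): is_metric d ->
  Defs.bounded d P1 -> Defs.bounded d P2 -> (forall x, P x -> P1 x \/ P2 x) -> Defs.bounded d P.
Proof.
  intros [H0 [Hs Ht]] [r1 H1] [r2 H2] HP.
  pose proof (Rle_abs r1). pose proof (Rle_abs r2).
  pose proof (Rabs_pos r1). pose proof (Rabs_pos r2).
  destruct (classic (exists u, P1 u)) as [[u0 Hu0]|N1];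
  destruct (classic (exists v, P2 v)) as [[v0 Hv0]|N2].
  - pose proof (Rle_abs (d u0 v0)). pose proof (Rabs_pos (d u0 v0)).
    exists (Rabs r1 + Rabs r2 + Rabs (d u0 v0)). intros x y Px Py.
    destruct (HP x Px) as [a|a]; destruct (HP y Py) as [b|b].
    + specialize (H1 x y a b). lra.
    + pose proof (Ht x u0 y). pose proof (Ht u0 v0 y).
      pose proof (H1 x u0 a Hu0). pose proof (H2 v0 y Hv0 b). lra.
    + pose proof (Ht x v0 y). pose proof (Ht v0 u0 y). rewrite (Hs v0 u0) in *.
      pose proof (H1 u0 y Hu0 b). pose proof (H2 x v0 a Hv0). lra.
    + specialize (H2 x y a b). lra.
  - exists r1. intros x y Px Py.
    destruct (HP x Px) as [a|a]; [|exfalso; apply N2; eauto].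
    destruct (HP y Py) as [b|b]; [|exfalso; apply N2; eauto]. auto.
  - exists r2. intros x y Px Py.
    destruct (HP x Px) as [a|a]; [exfalso; apply N1; eauto|].
    destruct (HP y Py) as [b|b]; [exfalso; apply N1; eauto|]. auto.
  - exists 0. intros x y Px Py.
    destruct (HP x Px) as [a|a]; [exfalso; apply N1; eauto|exfalso; apply N2; eauto].
Qed.

Lemma coarse_comp {X Y Z} dX dY dZ (f:X->Y) (g:Y->Z):
  coarse dX dY f -> coarse dY dZ g -> coarse dX dZ (fun x => g (f x)).
Proof.
  intros [cf pf] [cg pg]; split.
  - intros r hr. destruct (cf r hr) as [S1 [hS1 H1]].
    destruct (cg S1 hS1) as [S2 [hS2 H2]]. exists S2; split; auto.
  - intros B hB. exact (pf (fun y => B (g y)) (pg B hB)).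
Qed.

Lemma coarse_iso {X Y} dX dY (f:X->Y):
  (forall x x', dY (f x) (f x') = dX x x') -> coarse dX dY f.
Proof.
  intros Hf; split.
  - intros r hr; exists r; split; auto; intros; rewrite Hf; auto.
  - intros B [r Hr]; exists r; intros; rewrite <- Hf; auto.
Qed.

Definition qsum {X} (q1 q2: X-> Defs.Rplus) : X -> Defs.Rplus := fun x =>
  exist (fun t => 0 <= t) (proj1_sig (q1 x) + proj1_sig (q2 x))
    (Rplus_le_le_0_compat _ _ (proj2_sig (q1 x)) (proj2_sig (q2 x))).

Definition ext {X Y} (q: X-> Defs.Rplus) (H: cyl q -> Y) (dflt: X -> Y) (x:X) (t:R) : Y :=
  match excluded_middle_informative (0 <= t /\ t <= proj1_sig (q x)) with
  | left p => H (exist (fun p => 0 <= snd p /\ snd p <= proj1_sig (q (fst p))) (x,t) p)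
  | right _ => dflt x end.

Lemma ext_in {X Y} (q: X-> Defs.Rplus) (H: cyl q -> Y) d x t (p : 0 <= t /\ t <= proj1_sig (q x)) :
  ext q H d x t = H (exist (fun p => 0 <= snd p /\ snd p <= proj1_sig (q (fst p))) (x,t) p).
Proof.
  unfold ext. destruct excluded_middle_informative as [p'|n].
  - f_equal; apply cyl_eq; reflexivity.
  - contradiction.
Qed.

Definition hcat {X Y} (q1 q2: X-> Defs.Rplus) (H1: cyl q1 -> Y) (H2: cyl q2 -> Y) (g: X->Y)
  (u: cyl (qsum q1 q2)) : Y :=
  if Rle_dec (snd (proj1_sig u)) (proj1_sig (q1 (fst (proj1_sig u))))
  then ext q1 H1 g (fst (proj1_sig u)) (snd (proj1_sig u))
  else ext q2 H2 g (fst (proj1_sig u)) (snd (proj1_sig u) - proj1_sig (q1 (fst (proj1_sig u)))).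

Lemma rmax_lt a b c : Rmax a b < c -> a < c /\ b < c.
Proof. unfold Rmax; destruct Rle_dec; lra. Qed.
Lemma rmax_le a b c : Rmax a b <= c -> a <= c /\ b <= c.
Proof. unfold Rmax; destruct Rle_dec; lra. Qed.
Lemma rmax_lub_lt a b c : a < c -> b < c -> Rmax a b < c.
Proof. unfold Rmax; destruct Rle_dec; lra. Qed.
Lemma rmax_lub_le a b c : a <= c -> b <= c -> Rmax a b <= c.
Proof. unfold Rmax; destruct Rle_dec; lra. Qed.
Lemma rabs_lt a b : Rabs a < b <-> (-b < a /\ a < b).
Proof. unfold Rabs; destruct Rcase_abs; split; intros; lra. Qed.
Lemma rabs_le a b : Rabs a <= b <-> (-b <= a /\ a <= b).
Proof. unfold Rabs; destruct Rcase_abs; split; intros; lra. Qed.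

Lemma qsum_coarse {X} (dX: X->X->R) (q1 q2: X -> Defs.Rplus) :
  coarse dX dRplus q1 -> coarse dX dRplus q2 -> coarse dX dRplus (qsum q1 q2).
Proof.
  intros [cq1 pq1] [cq2 pq2]; split.
  - intros r hr. destruct (cq1 r hr) as [S1 [h1 H1]]. destruct (cq2 r hr) as [S2 [h2 H2]].
    exists (S1 + S2); split; [lra|]. intros x x' hx.
    specialize (H1 x x' hx). specialize (H2 x x' hx). unfold dRplus in *; simpl.
    apply rabs_lt in H1. apply rabs_lt in H2. apply rabs_lt. lra.
  - intros B [r Hr].
    destruct (classic (exists b0, B b0)) as [[b0 Hb0]|N].
    + set (M := proj1_sig b0 + Rabs r).
      destruct (pq1 (fun s => proj1_sig s <= M)) as [r' Hr'].
      { exists M. intros s s' hs hs'. destruct s as [s ps], s' as [s' ps']. unfold dRplus; simpl in *.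
        apply rabs_le. pose proof (proj2_sig b0). pose proof (Rabs_pos r). unfold M in *. lra. }
      exists r'. intros x x' hx hx'. apply Hr'.
      * specialize (Hr _ _ hx Hb0). unfold dRplus in Hr; simpl in Hr. apply rabs_le in Hr.
        pose proof (Rle_abs r). pose proof (proj2_sig (q2 x)). unfold M. lra.
      * specialize (Hr _ _ hx' Hb0). unfold dRplus in Hr; simpl in Hr. apply rabs_le in Hr.
        pose proof (Rle_abs r). pose proof (proj2_sig (q2 x')). unfold M. lra.
    + exists 0. intros x x' hx. exfalso; apply N; eauto.
Qed.

Lemma concat {X Y} (dX: X->X->R) (dY: Y->Y->R) (f g h: X -> Y) :
  is_metric dX -> is_metric dY ->
  coarsely_homotopic dX dY f g -> coarsely_homotopic dX dY g h -> coarsely_homotopic dX dY f h.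
Proof.
  intros mX mY [q1 [cq1 [H1 [[cH1 pH1] [H10 H11]]]]] [q2 [cq2 [H2 [[cH2 pH2] [H20 H21]]]]].
  pose proof mX as [mX0 [mXs mXt]]. pose proof mY as [mY0 [mYs mYt]].
  exists (qsum q1 q2). split; [apply qsum_coarse; auto|].
  exists (hcat q1 q2 H1 H2 g). split; [split|split].
  -
    intros r hr. destruct cq1 as [cq1 _].
    destruct (cq1 r hr) as [Sq [hSq Hq]].
    destruct (cH1 r hr) as [S1 [hS1 HH1]].
    destruct (cH2 (r+Sq)) as [S2 [hS2 HH2]]; [lra|].
    destruct (cH1 (r+Sq)) as [S3 [hS3 HH3]]; [lra|].
    exists (S1+S2+S3); split; [lra|].
    intros [[x t] pu] [[x' t'] pv] Huv.
    unfold dcyl in Huv; simpl in Huv. apply rmax_lt in Huv as [hd ht].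
    pose proof (Hq x x' hd) as hq. unfold dRplus in hq. apply rabs_lt in hq. apply rabs_lt in ht.
    simpl in pu, pv.
    unfold hcat; simpl.
    destruct Rle_dec as [a1|a1]; destruct Rle_dec as [a2|a2].
    + rewrite (ext_in q1 H1 g x t (conj (proj1 pu) a1)).
      rewrite (ext_in q1 H1 g x' t' (conj (proj1 pv) a2)).
      assert (dY (H1 (exist _ (x, t) (conj (proj1 pu) a1))) (H1 (exist _ (x', t') (conj (proj1 pv) a2))) < S1).
      { apply HH1. unfold dcyl; simpl. apply rmax_lub_lt; [lra|apply rabs_lt; lra]. }
      lra.
    + assert (p2 : 0 <= t' - proj1_sig (q1 x') /\ t' - proj1_sig (q1 x') <= proj1_sig (q2 x')) by lra.
      rewrite (ext_in q1 H1 g x t (conj (proj1 pu) a1)).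
      rewrite (ext_in q2 H2 g x' _ p2).
      assert (E1 : dY (H1 (exist _ (x, t) (conj (proj1 pu) a1))) (g x) < S3).
      { rewrite <- H11. apply HH3. unfold dcyl; simpl. rewrite mX0.
        apply rmax_lub_lt; [lra|apply rabs_lt; lra]. }
      assert (E2 : dY (g x) (H2 (exist _ (x', _) p2)) < S2).
      { rewrite <- H20. apply HH2. unfold dcyl; simpl.
        apply rmax_lub_lt; [lra|apply rabs_lt; lra]. }
      pose proof (mYt (H1 (exist _ (x, t) (conj (proj1 pu) a1))) (g x) (H2 (exist _ (x', _) p2))).
      lra.
    + assert (p1 : 0 <= t - proj1_sig (q1 x) /\ t - proj1_sig (q1 x) <= proj1_sig (q2 x)) by lra.
      rewrite (ext_in q1 H1 g x' t' (conj (proj1 pv) a2)).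
      rewrite (ext_in q2 H2 g x _ p1).
      assert (E1 : dY (g x') (H1 (exist _ (x', t') (conj (proj1 pv) a2))) < S3).
      { rewrite <- H11. apply HH3. unfold dcyl; simpl. rewrite mX0.
        apply rmax_lub_lt; [lra|apply rabs_lt; lra]. }
      assert (E2 : dY (H2 (exist _ (x, _) p1)) (g x') < S2).
      { rewrite <- H20. apply HH2. unfold dcyl; simpl.
        apply rmax_lub_lt; [lra|apply rabs_lt; lra]. }
      pose proof (mYt (H2 (exist _ (x, _) p1)) (g x') (H1 (exist _ (x', t') (conj (proj1 pv) a2)))).
      lra.
    + assert (p1 : 0 <= t - proj1_sig (q1 x) /\ t - proj1_sig (q1 x) <= proj1_sig (q2 x)) by lra.
      assert (p2 : 0 <= t' - proj1_sig (q1 x') /\ t' - proj1_sig (q1 x') <= proj1_sig (q2 x')) by lra.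
      rewrite (ext_in q2 H2 g x _ p1).
      rewrite (ext_in q2 H2 g x' _ p2).
      assert (dY (H2 (exist _ (x, _) p1)) (H2 (exist _ (x', _) p2)) < S2).
      { apply HH2. unfold dcyl; simpl. apply rmax_lub_lt; [lra|apply rabs_lt; lra]. }
      lra.
  -
    intros B hB.
    apply (bounded_union _
      (fun u => snd (proj1_sig u) <= proj1_sig (q1 (fst (proj1_sig u))) /\
                B (ext q1 H1 g (fst (proj1_sig u)) (snd (proj1_sig u))))
      (fun u => ~ snd (proj1_sig u) <= proj1_sig (q1 (fst (proj1_sig u))) /\
                B (ext q2 H2 g (fst (proj1_sig u)) (snd (proj1_sig u) - proj1_sig (q1 (fst (proj1_sig u))))))).
    + apply dcyl_metric; auto.
    + destruct (pH1 B hB) as [r1 Hr1]. exists r1.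
      intros [[x t] pu] [[x' t'] pv] [a1 b1] [a2 b2]. simpl in *.
      rewrite (ext_in q1 H1 g x t (conj (proj1 pu) a1)) in b1.
      rewrite (ext_in q1 H1 g x' t' (conj (proj1 pv) a2)) in b2.
      exact (Hr1 _ _ b1 b2).
    + destruct (pH2 B hB) as [r2 Hr2].
      destruct cq1 as [cq1 _].
      destruct (cq1 (Rabs r2 + 1)) as [Sq [hSq Hq]]; [pose proof (Rabs_pos r2); lra|].
      exists (Rabs r2 + Sq).
      intros [[x t] pu] [[x' t'] pv] [a1 b1] [a2 b2]. simpl in *.
      assert (p1 : 0 <= t - proj1_sig (q1 x) /\ t - proj1_sig (q1 x) <= proj1_sig (q2 x)) by lra.
      assert (p2 : 0 <= t' - proj1_sig (q1 x') /\ t' - proj1_sig (q1 x') <= proj1_sig (q2 x')) by lra.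
      rewrite (ext_in q2 H2 g x _ p1) in b1.
      rewrite (ext_in q2 H2 g x' _ p2) in b2.
      pose proof (Hr2 _ _ b1 b2) as hb. unfold dcyl in hb |- *; simpl in hb |- *.
      apply rmax_le in hb as [hd ht]. pose proof (Rle_abs r2).
      pose proof (Hq x x') as hq. unfold dRplus in hq.
      assert (hq' : Rabs (proj1_sig (q1 x) - proj1_sig (q1 x')) < Sq) by (apply hq; lra).
      apply rabs_lt in hq'. apply rabs_le in ht.
      apply rmax_lub_le; [lra|apply rabs_le; lra].
    + intros u. unfold hcat. destruct Rle_dec; auto.
  - intros x. unfold hcat. simpl.
    destruct Rle_dec as [a|a].
    + assert (p : 0 <= 0 /\ 0 <= proj1_sig (q1 x)) by (pose proof (proj2_sig (q1 x)); simpl in *; lra).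
      rewrite (ext_in q1 H1 g x 0 p). rewrite <- (H10 x). f_equal. apply cyl_eq; reflexivity.
    + exfalso. apply a. exact (proj2_sig (q1 x)).
  - intros x. unfold hcat. simpl.
    pose proof (proj2_sig (q1 x)). pose proof (proj2_sig (q2 x)). simpl in *.
    destruct Rle_dec as [a|a].
    + assert (p : 0 <= proj1_sig (q1 x) + proj1_sig (q2 x) /\
                  proj1_sig (q1 x) + proj1_sig (q2 x) <= proj1_sig (q1 x)) by lra.
      rewrite (ext_in q1 H1 g x _ p).
      assert (z : proj1_sig (q2 x) = 0) by lra.
      rewrite <- (H21 x).
      transitivity (H1 (i1 q1 x)); [f_equal; apply cyl_eq; simpl; rewrite z; f_equal; ring|].
      rewrite H11, <- H20. f_equal. apply cyl_eq. simpl. rewrite z. reflexivity.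
    + assert (p : 0 <= proj1_sig (q1 x) + proj1_sig (q2 x) - proj1_sig (q1 x) /\
                  proj1_sig (q1 x) + proj1_sig (q2 x) - proj1_sig (q1 x) <= proj1_sig (q2 x)) by lra.
      rewrite (ext_in q2 H2 g x _ p). rewrite <- (H21 x). f_equal. apply cyl_eq. simpl. f_equal; ring.
Qed.

Definition cylmap {A B} (hh: A->B) (q: B-> Defs.Rplus) (w : cyl (fun a => q (hh a))) : cyl q :=
  exist (fun p => 0 <= snd p /\ snd p <= proj1_sig (q (fst p)))
    (hh (fst (proj1_sig w)), snd (proj1_sig w)) (proj2_sig w).

Lemma cylmap_coarse {A B} (dA: A->A->R) (dB: B->B->R) (hh: A->B) (q: B-> Defs.Rplus) :
  coarse dA dB hh -> coarse (@dcyl A dA (fun a => q (hh a))) (@dcyl B dB q) (cylmap hh q).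
Proof.
  intros [ch ph]; split.
  - intros r hr. destruct (ch r hr) as [S [hS HS]]. exists (S + r); split; [lra|].
    intros [[a t] pa] [[a' t'] pa'] H. unfold dcyl in *; simpl in *.
    apply rmax_lt in H as [h1 h2]. specialize (HS a a' h1).
    apply rmax_lub_lt; lra.
  - intros C [r Hr].
    destruct (ph (fun y => exists w, C (cylmap hh q w) /\ y = hh (fst (proj1_sig w)))) as [r' Hr'].
    { exists r. intros y y' [w [hw ->]] [w' [hw' ->]].
      specialize (Hr _ _ hw hw'). unfold dcyl in Hr; simpl in Hr. apply rmax_le in Hr. tauto. }
    exists (Rmax r' r). intros w w' hw hw'.
    pose proof (Hr _ _ hw hw') as h. unfold dcyl in h |- *. simpl in h.
    apply rmax_le in h as [_ h].
    assert (dA (fst (proj1_sig w)) (fst (proj1_sig w')) <= r').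
    { apply Hr'; eauto. }
    apply rmax_lub_le.
    + apply Rle_trans with r'; auto; apply Rmax_l.
    + apply Rle_trans with r; auto; apply Rmax_r.
Qed.

Lemma cat_pull (X Y: MetricSpace) (f: X->Y) (g: Y->X) (B: Y->Prop) :
  coarse (ms_dist X) (ms_dist Y) f -> coarse (ms_dist Y) (ms_dist X) g ->
  coarsely_homotopic (ms_dist X) (ms_dist X) (fun x => g (f x)) (fun x => x) ->
  coarsely_categorical Y B -> coarsely_categorical X (fun x => B (f x)).
Proof.
  intros cf cg [p [cp [K [cK [K0 K1]]]]] [alpha [j [calpha [cj [q [cq [H [cH [H0 H1]]]]]]]]].
  set (fA := fun a : {x : X | B (f x)} => exist B (f (proj1_sig a)) (proj2_sig a)).
  assert (cfA : coarse (dsub (fun x => B (f x))) (dsub B) fA).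
  { destruct cf as [ccf pcf]; split.
    - intros r hr. destruct (ccf r hr) as [S [hS HS]]. exists S; split; auto.
      intros a a' h. unfold dsub in *; simpl. auto.
    - intros C [r Hr].
      destruct (pcf (fun y => exists pr : B y, C (exist B y pr))) as [r' Hr'].
      { exists r. intros y y' [py hy] [py' hy']. exact (Hr _ _ hy hy'). }
      exists r'. intros a a' ha ha'. unfold dsub. apply Hr'.
      + exists (proj2_sig a). exact ha.
      + exists (proj2_sig a'). exact ha'. }
  assert (cval : coarse (dsub (fun x => B (f x))) (ms_dist X) (@proj1_sig X (fun x => B (f x)))).
  { apply coarse_iso. intros; reflexivity. }
  exists (fun t => g (alpha t)), (fun a => j (fA a)).
  split; [apply (coarse_comp _ _ _ _ _ calpha cg)|].
  split; [apply (coarse_comp _ _ _ _ _ cfA cj)|].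
  apply concat with (g := fun a => g (f (proj1_sig a))).
  - apply dsub_metric.
  - apply ms_metric.
  - exists (fun a => q (fA a)). split; [apply (coarse_comp _ _ _ _ _ cfA cq)|].
    exists (fun w => g (H (cylmap fA q w))). split.
    + apply (coarse_comp _ _ _ _ _ (coarse_comp _ _ _ _ _ (cylmap_coarse _ _ _ _ cfA) cH) cg).
    + split.
      * intros a. rewrite <- H0. f_equal. f_equal. apply cyl_eq; reflexivity.
      * intros a. simpl. replace (cylmap fA q (i1 (fun a0 => q (fA a0)) a)) with (i1 q (fA a))
          by (apply cyl_eq; reflexivity).
        rewrite H1. reflexivity.
  - exists (fun a => p (proj1_sig a)). split; [apply (coarse_comp _ _ _ _ _ cval cp)|].
    exists (fun w => K (cylmap (@proj1_sig X (fun x => B (f x))) p w)). split.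
    + apply (coarse_comp _ _ _ _ _ (cylmap_coarse _ _ _ _ cval) cK).
    + split.
      * intros a. rewrite <- K0. f_equal. apply cyl_eq; reflexivity.
      * intros a. rewrite <- K1. f_equal. apply cyl_eq; reflexivity.
Qed.

Lemma cover_pull (X Y: MetricSpace) (f: X->Y) (g: Y->X) :
  coarse (ms_dist X) (ms_dist Y) f -> coarse (ms_dist Y) (ms_dist X) g ->
  coarsely_homotopic (ms_dist X) (ms_dist X) (fun x => g (f x)) (fun x => x) ->
  forall k, cat_cover Y k -> cat_cover X k.
Proof.
  intros cf cg hgf k [A [HA Hcov]].
  exists (fun i x => A i (f x)). split.
  - intros i hi. apply (cat_pull X Y f g); auto.
  - intros x. destruct (Hcov (f x)) as [i [hi hA]]. eauto.
Qed.

Theorem proposition2p16 (X Y : MetricSpace) :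
  coarsely_homotopy_equivalent X Y -> ccat X = ccat Y.
Proof.
  intros [f [cf [g [cg [hgf hfg]]]]].
  assert (E : cat_cover X = cat_cover Y).
  { apply functional_extensionality. intros k. apply propositional_extensionality. split.
    - apply (cover_pull Y X g f); auto.
    - apply (cover_pull X Y f g); auto. }
  unfold ccat. rewrite E. reflexivity.
Qed.
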